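(* Let $p,q$ be distinct primes and $n\geqslant m\geqslant2$ with $n+m$ even. Then there exists a set of non-identity arrows of $C_{p^nq^m}$ which is a minimal generating set of the transfer system it generates and whose cardinality is $|R_{(n+m)/2}|+2$.
   Context: For a finite group $G$, an arrow is a pair $(H,K)$ of subgroups with $H\leqslant K$; identity arrows are those with $H=K$. A $G$-transfer system is a set of arrows containing all identities and closed under composition ($(H,K),(K,L)\Rightarrow(H,L)$), conjugation ($(H,K)\Rightarrow(gHg^{-1},gKg^{-1})$) and restriction ($(H,K)$ and $L\leqslant K\Rightarrow(H\cap L,L)$). For a set $S$ of non-identity arrows, $\langle S\rangle$ is the smallest transfer system containing $S$; $S$ is a minimal generating set of $\langle S\rangle$ if $\langle S\setminus\{s\}\rangle\neq\langle S\rangle$ for all $s\in S$. In $C_{p^nq^m}$ let $C_{p^aq^x}$ be the unique subgroup of order $p^aq^x$, and write $(a,x;b,y)$ for the arrow $(C_{p^aq^x},C_{p^bq^y})$ with $a\leqslant b$, $x\leqslant y$. Its midpoint is $(a+x+b+y)/2$. For a half-integer or integer $M$, $R_M$ is the set of all non-identity arrows of $C_{p^nq^m}$ with midpoint $M$. *)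

(* Defs.v *)
From mathcomp Require Import all_boot all_fingroup all_solvable.
Set Implicit Arguments. Unset Strict Implicit. Unset Printing Implicit Defensive.
Local Open Scope group_scope.

Section TransferSystems.
Variable gT : finGroupType.

Definition arrow_t := ({group gT} * {group gT})%type.

Definition is_arrow (G : {group gT}) (A : arrow_t) : bool :=
  (A.1 \subset A.2) && (A.2 \subset G).

Definition nonid_arrows (G : {group gT}) : {set arrow_t} :=
  [set A : arrow_t | is_arrow G A && (A.1 != A.2)].

Definition is_transfer_system (G : {group gT}) (T : {set arrow_t}) : bool :=
  [&& [forall A in T, is_arrow G A],
      [forall H : {group gT}, (H \subset G) ==> ((H, H) \in T)],
      [forall H : {group gT}, forall K : {group gT}, forall L : {group gT},
          ((H, K) \in T) && ((K, L) \in T) ==> ((H, L) \in T)],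
      [forall g in G, forall A in T, ((A.1 :^ g)%G, (A.2 :^ g)%G) \in T] &
      [forall A in T, forall L : {group gT},
          (L \subset A.2) ==> (((A.1 :&: L)%G, L) \in T)]].

Definition gen_ts (G : {group gT}) (S : {set arrow_t}) : {set arrow_t} :=
  \bigcap_(T : {set arrow_t} | is_transfer_system G T && (S \subset T)) T.

Definition minimal_gen (G : {group gT}) (S : {set arrow_t}) : Prop :=
  forall s, s \in S -> gen_ts G (S :\ s) != gen_ts G S.

(* For G cyclic of order p^n q^m, the subgroup C_{p^a q^x} has order p^a q^x,
   so a = logn p #|H|, x = logn q #|H|.  Rmid2 G p q k is the set of non-identity
   arrows (a,x;b,y) with a+x+b+y = k, i.e. with midpoint k/2; thus R_M is
   Rmid2 G p q (2*M). *)
Definition Rmid2 (G : {group gT}) (p q k : nat) : {set arrow_t} :=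
  [set A in nonid_arrows G |
    logn p #|A.1| + logn q #|A.1| + logn p #|A.2| + logn q #|A.2| == k].

End TransferSystems.

(* Main.v *)
Require Import Defs.
From mathcomp Require Import all_boot all_fingroup all_solvable.
From mathcomp Require Import zify.
Set Implicit Arguments. Unset Strict Implicit. Unset Printing Implicit Defensive.

Definition Pc (m a h1 h2 k1 k2 : nat) : bool :=
  [|| (h1 + h2 + (k1 + k2) == 2 * m + 2 * a) &&
        ~~ [&& h1 == m + a - 1, h2 == 0, k1 == m + a + 1 & k2 == 0],
      [&& h1 == a, h2 == m, k1 == a + 1 & k2 == m],
      [&& h1 == m + a, h2 == 0, k1 == m + a & k2 == 1]
    | [&& h1 == m + a, h2 == 0, k1 == m + a + 1 & k2 == 0]].

Lemma Pc_eq0 m a h1 h2 k1 k2 : a = 0 -> k1 <= m + 2 * a ->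
  Pc m a h1 h2 k1 k2 = [|| [&& h1 == a, h2 == m, k1 == a + 1 & k2 == m],
     [&& h1 == m + a, h2 == 0, k1 == m + a & k2 == 1] |
     h1 + h2 + (k1 + k2) == 2 * m + 2 * a].
Proof.
move=> a0 kb; rewrite /Pc.
have -> : (k1 == m + a + 1) = false by apply/negbTE; apply/eqP; lia.
rewrite !andbF /= andbT orbF.
by rewrite orbC -!orbA.
Qed.
Lemma Pc_eqpos m a h1 h2 k1 k2 :
  Pc m a h1 h2 k1 k2 = [|| [&& h1 == a, h2 == m, k1 == a + 1 & k2 == m],
     [&& h1 == m + a, h2 == 0, k1 == m + a & k2 == 1],
     [&& h1 == m + a, h2 == 0, k1 == m + a + 1 & k2 == 0] |
     ~~ [&& h1 == m + a - 1, h2 == 0, k1 == m + a + 1 & k2 == 0] &&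
     (h1 + h2 + (k1 + k2) == 2 * m + 2 * a)].
Proof. by rewrite /Pc andbC orbC -!orbA. Qed.

Lemma PcP m a h1 h2 k1 k2 : Pc m a h1 h2 k1 k2 ->
  [\/ h1 + h2 + (k1 + k2) = 2 * m + 2 * a /\
        ~ (h1 = m + a - 1 /\ h2 = 0 /\ k1 = m + a + 1 /\ k2 = 0),
      [/\ h1 = a, h2 = m, k1 = a + 1 & k2 = m],
      [/\ h1 = m + a, h2 = 0, k1 = m + a & k2 = 1] |
      [/\ h1 = m + a, h2 = 0, k1 = m + a + 1 & k2 = 0]].
Proof.
case/or4P.
- case/andP => /eqP e ne; apply: Or41; split => // [[e1 [e2 [e3 e4]]]].
  by move: ne; rewrite e1 e2 e3 e4 !eqxx.
- by case/and4P => /eqP ? /eqP ? /eqP ? /eqP ?; apply: Or42.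
- by case/and4P => /eqP ? /eqP ? /eqP ? /eqP ?; apply: Or43.
- by case/and4P => /eqP ? /eqP ? /eqP ? /eqP ?; apply: Or44.
Qed.

Lemma Pc_wt m a h1 h2 k1 k2 : Pc m a h1 h2 k1 k2 ->
  [/\ 2 * m + 2 * a <= h1 + h2 + (k1 + k2),
      h1 + h2 + (k1 + k2) <= (2 * m + 2 * a).+1 &
      h1 + h2 + (k1 + k2) = (2 * m + 2 * a).+1 -> k1 + k2 = (h1 + h2).+1].
Proof. by case/PcP => [[e _]|[-> -> -> ->]|[-> -> -> ->]|[-> -> -> ->]]; split; lia. Qed.

Lemma key m a x1 x2 y1 y2 v1 v2 h1 h2 k1 k2 :
  2 <= m ->
  Pc m a x1 x2 y1 y2 -> Pc m a v1 v2 y1 y2 ->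
  v1 + v2 + (y1 + y2) = (2 * m + 2 * a).+1 ->
  x1 <= v1 -> x2 <= v2 -> v1 + v2 = (x1 + x2).+1 ->
  Pc m a h1 h2 k1 k2 -> h1 <= k1 -> h2 <= k2 ->
  v1 <= k1 -> v2 <= k2 -> minn h1 v1 = x1 -> minn h2 v2 = x2 ->
  k1 <= m + 2 * a -> k2 <= m ->
  [/\ h1 = x1, h2 = x2, k1 = y1 & k2 = y2].
Proof.
move=> m2 Px Pv wv xv1 xv2 rv Ph hk1 hk2 vk1 vk2 mn1 mn2 kb1 kb2.
case/PcP: Pv => [[e _] | [e1 e2 e3 e4] | [e1 e2 e3 e4] | [e1 e2 e3 e4]]; first lia;
  subst v1 v2 y1 y2.
all: case/PcP: Px => [[e ne] | [? ? ? ?] | [? ? ? ?] | [? ? ? ?]]; try lia;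
  case/PcP: Ph => [[e' ne'] | [? ? ? ?] | [? ? ? ?] | [? ? ? ?]]; split; lia.
Qed.

Section Coords.
Variables (gT : finGroupType) (G : {group gT}) (p q n m : nat).
Hypotheses (pp : prime p) (pq : prime q) (pnq : p != q) (cycG : cyclic G)
  (oG : #|G| = p ^ n * q ^ m).

Definition cp (H : {set gT}) := logn p #|H|.
Definition cq (H : {set gT}) := logn q #|H|.

Lemma cop_pq a b : coprime (p ^ a) (q ^ b).
Proof.
apply: coprimeXl; apply: coprimeXr.
by rewrite prime_coprime // dvdn_prime2 // eq_sym.
Qed.

Lemma logs_pq a b : logn p (p ^ a * q ^ b) = a /\ logn q (p ^ a * q ^ b) = b.
Proof.
have p0 := prime_gt0 pp; have q0 := prime_gt0 pq.
have pa0 : 0 < p ^ a by rewrite expn_gt0 p0.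
have qb0 : 0 < q ^ b by rewrite expn_gt0 q0.
rewrite !lognM // !pfactorK //.
have cpq : coprime p q by rewrite prime_coprime // dvdn_prime2 // .
rewrite (@logn_coprime p (q ^ b)) ?(@logn_coprime q (p ^ a)) ?addn0 //.
  by apply: coprimeXr; rewrite prime_coprime // dvdn_prime2 // eq_sym.
by apply: coprimeXr.
Qed.

Lemma card_coords (H : {group gT}) : H \subset G ->
  [/\ #|H| = p ^ cp H * q ^ cq H, cp H <= n & cq H <= m].
Proof.
move=> sHG; have dH := cardSg sHG; rewrite oG in dH.
have H0 : 0 < #|H| by [].
have [k ck dk] := pfactor_coprime pp H0.
have kd : k %| q ^ m.
  have : k %| p ^ n * q ^ m by apply: dvdn_trans dH; rewrite {1}dk dvdn_mulr.
  rewrite Gauss_dvdr //. rewrite coprime_sym; exact: coprimeXl.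
have [b lbm kq] := (dvdn_pfactor _ _ pq) kd.
have eH : #|H| = p ^ logn p #|H| * q ^ b by rewrite {1}dk kq mulnC.
have [l1 l2] := logs_pq (logn p #|H|) b.
rewrite /cp /cq; rewrite -eH in l1 l2.
rewrite l2; split => //.
have G0 : 0 < p ^ n * q ^ m by rewrite -oG.
have := dvdn_leq_log p G0 dH; by have [-> _] := logs_pq n m.
Qed.

Lemma sub_coords (H K : {group gT}) : H \subset G -> K \subset G ->
  (H \subset K) = (cp H <= cp K) && (cq H <= cq K).
Proof.
move=> sHG sKG; rewrite -(cardSg_cyclic cycG sHG sKG).
have [eH _ _] := card_coords sHG; have [eK _ _] := card_coords sKG.
apply/idP/andP.
  move=> d; have K0 : 0 < #|K| by [].
  by split; [rewrite /cp | rewrite /cq]; apply: dvdn_leq_log.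
case=> l1 l2; rewrite eH eK; apply: dvdn_mul; rewrite dvdn_exp2l //.
Qed.

Lemma eq_coords (H K : {group gT}) : H \subset G -> K \subset G ->
  cp H = cp K -> cq H = cq K -> H = K.
Proof.
move=> sHG sKG e1 e2; apply: val_inj => /=; apply/eqP.
rewrite (eq_subG_cyclic cycG sHG sKG).
have [eH _ _] := card_coords sHG; have [eK _ _] := card_coords sKG.
by rewrite eH eK e1 e2.
Qed.

Lemma exists_coords a x : a <= n -> x <= m ->
  exists H : {group gT}, [/\ H \subset G, cp H = a & cq H = x].
Proof.
move=> an xm; case/cyclicP: cycG => g dG.
have d : p ^ a * q ^ x %| #[g]%g.
  rewrite orderE -dG oG; apply: dvdn_mul; rewrite dvdn_exp2l //.
have := cycle_sub_group d => /setP /(_ (<[g ^+ (#[g]%g %/ (p ^ a * q ^ x))]>%G)).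
rewrite !inE eqxx => /andP [s /eqP c].
exists (<[g ^+ (#[g]%g %/ (p ^ a * q ^ x))]>%G); split.
- by rewrite dG.
- by rewrite /cp c; have [-> _] := logs_pq a x.
- by rewrite /cq c; have [_ ->] := logs_pq a x.
Qed.

Lemma meet_coords (H K : {group gT}) : H \subset G -> K \subset G ->
  cp (H :&: K)%G = minn (cp H) (cp K) /\ cq (H :&: K)%G = minn (cq H) (cq K).
Proof.
move=> sHG sKG.
have sIG : (H :&: K)%G \subset G by rewrite (subset_trans (subsetIl _ _)).
have [a1 a2 a3] := card_coords sHG; have [b1 b2 b3] := card_coords sKG.
have [D [sDG D1 D2]] := exists_coords (a := minn (cp H) (cp K)) (x := minn (cq H) (cq K))
   (leq_trans (geq_minl _ _) a2) (leq_trans (geq_minl _ _) a3).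
have sDH : D \subset H by rewrite sub_coords // D1 D2 !geq_minl.
have sDK : D \subset K by rewrite sub_coords // D1 D2 !geq_minr.
have sDI : D \subset (H :&: K)%G by rewrite subsetI sDH sDK.
have sIH : (H :&: K)%G \subset H by apply: subsetIl.
have sIK : (H :&: K)%G \subset K by apply: subsetIr.
rewrite (sub_coords sDG sIG) D1 D2 in sDI.
rewrite (sub_coords sIG sHG) in sIH.
rewrite (sub_coords sIG sKG) in sIK.
move: sDI sIH sIK.
move: (cp (H :&: K)%G) (cq (H :&: K)%G) (cp H) (cq H) (cp K) (cq K) => x1 x2 h1 h2 k1 k2.
clear; move=> /andP[? ?] /andP[? ?] /andP[? ?]; split; lia.
Qed.


Definition rk (H : {set gT}) := cp H + cq H.
Definition wt (A : arrow_t gT) := rk A.1 + rk A.2.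

Lemma le_rk (H K : {group gT}) : H \subset G -> K \subset G -> H \subset K ->
  rk H <= rk K.
Proof.
move=> sHG sKG; rewrite sub_coords // /rk => /andP[].
move: (cp H) (cq H) (cp K) (cq K) => ????; clear; lia.
Qed.

Lemma lt_rk (H K : {group gT}) : H \subset G -> K \subset G -> H \subset K ->
  H != K -> rk H < rk K.
Proof.
move=> sHG sKG sHK nHK; move: (sHK); rewrite sub_coords // /rk => /andP[l1 l2].
case: (ltnP (cp H + cq H) (cp K + cq K)) => // h.
have e1 : cp H = cp K by move: l1 l2 h; move: (cp H) (cq H) (cp K) (cq K) => ????; clear; lia.
have e2 : cq H = cq K by move: l1 l2 h; move: (cp H) (cq H) (cp K) (cq K) => ????; clear; lia.
by rewrite (eq_coords sHG sKG e1 e2) eqxx in nHK.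
Qed.


Section TS.
Variable bad : arrow_t gT -> bool.
Variable S0 : {set arrow_t gT}.
Variable W : nat.
Hypothesis badR : forall (H K L : {group gT}), H \subset K -> K \subset G ->
  L \subset K -> bad ((H :&: L)%G, L) -> bad (H, K).
Hypothesis badC : forall (x y z : {group gT}), x \subset y -> y \subset z ->
  z \subset G -> ~~ bad (x, y) -> ~~ bad (y, z) -> ~~ bad (x, z).
Hypothesis S0ok : forall A, A \in S0 ->
  [/\ is_arrow G A, ~~ bad A, wt A <= W.+1 & wt A = W.+1 -> rk A.2 = (rk A.1).+1].

Definition compw (A : arrow_t gT) :=
  [exists v : {group gT}, [&& (v, A.2) \in S0, wt (v, A.2) == W.+1,
      A.1 \subset v & rk v == (rk A.1).+1]].

Definition Tset : {set arrow_t gT} :=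
  [set A : arrow_t gT | is_arrow G A && ((A.1 == A.2) || (~~ bad A &&
     [|| wt A < W, A \in S0 | (wt A == W) && compw A]))].

Lemma S0_Tset : S0 \subset Tset.
Proof.
apply/subsetP => A AS; have [a1 a2 _ _] := S0ok AS.
by rewrite inE a1 a2 AS /= !orbT.
Qed.

Lemma Tset_ts : is_transfer_system G Tset.
Proof.
apply/and5P; split.
- by apply/forall_inP => A; rewrite inE => /andP[].
- apply/forallP => H; apply/implyP => sHG.
  by rewrite inE /is_arrow /= subxx sHG eqxx.
- apply/forallP => H; apply/forallP => K; apply/forallP => L.
  apply/implyP => /andP[]; rewrite !inE /is_arrow /=.
  case/andP => /andP[sHK sKG] o1 /andP[/andP[sKL sLG] o2].
  rewrite (subset_trans sHK sKL) sLG /=.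
  case: (eqVneq H K) o1 => [-> _ | nHK /= o1]; first by rewrite o2.
  case: (eqVneq K L) o2 => [<- _ | nKL /= o2]; first by rewrite o1 orbT.
  have sHG := subset_trans sHK sKG.
  case/andP: o1 => b1 _; case/andP: o2 => b2 o2.
  rewrite (badC sHK sKL sLG b1 b2) /=.
  have hk := lt_rk sHG sKG sHK nHK.
  have wKL : wt (K, L) <= W \/ ((K, L) \in S0 /\ wt (K, L) = W.+1).
    case/or3P: o2 => [/ltnW -> | KS | /andP[/eqP -> _]]; [by left | | by left].
    have [_ _ le e] := S0ok KS.
    by case: (ltngtP (wt (K, L)) W.+1) le => // [lt _ | eq _]; [left | right].
  case: wKL => [le | [KS ew]].
    apply/orP; right; apply/orP; left; move: le hk; rewrite /wt /=.
    move: (rk H) (rk K) (rk L) => ???; clear; lia.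
  have [_ _ _ /(_ ew) /= eL] := S0ok KS.
  move: ew; rewrite /wt /= => ew.
  case: (ltnP (rk H).+1 (rk K)) => h.
    apply/orP; right; apply/orP; left; rewrite /wt /=.
    move: h ew eL; move: (rk H) (rk K) (rk L) => ???; clear; lia.
  have eK : rk K = (rk H).+1 by move: h hk; move: (rk H) (rk K) => ??; clear; lia.
  apply/orP; right; apply/orP; right; apply/orP; right; apply/andP; split.
    rewrite /wt /=; apply/eqP; move: eK ew eL.
    move: (rk H) (rk K) (rk L) => ???; clear; lia.
  by apply/existsP; exists K; rewrite /= KS sHK /wt /= ew eK !eqxx.
- apply/forall_inP => g gG; apply/forall_inP => A; rewrite inE => /andP[aA oA].
  have ab := cyclic_abelian cycG.
  case/andP: (aA) => s12 s2G; have s1G := subset_trans s12 s2G.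
  have e1 : (A.1 :^ g)%G = A.1.
    by apply: val_inj => /=; apply: (normsP (sub_abelian_norm ab s1G)).
  have e2 : (A.2 :^ g)%G = A.2.
    by apply: val_inj => /=; apply: (normsP (sub_abelian_norm ab s2G)).
  by rewrite e1 e2 -surjective_pairing inE aA oA.
- apply/forall_inP => [[H K]]; rewrite inE /is_arrow /= => /andP[/andP[sHK sKG] oA].
  apply/forallP => L; apply/implyP => sLK.
  have sLG := subset_trans sLK sKG; have sHG := subset_trans sHK sKG.
  have sIL : (H :&: L)%G \subset L by apply: subsetIr.
  rewrite inE /is_arrow /= sIL sLG /=.
  case: (eqVneq L K) => [eLK | nLK].
    have -> : (H :&: L)%G = H.
      by apply: val_inj => /=; rewrite eLK; apply/setIidPl.
    by rewrite eLK.
  case: (eqVneq (H :&: L)%G L) => //= nIL.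
  case: (eqVneq H K) oA => [eHK _ | nHK /= oA].
    rewrite -eHK in sLK.
    have e : (H :&: L)%G = L by apply: val_inj => /=; apply/setIidPr.
    by rewrite e eqxx in nIL.
  case/andP: oA => bA oA.
  have -> /= : ~~ bad ((H :&: L)%G, L).
    by apply/negP => /(badR sHK sKG sLK); rewrite (negbTE bA).
  have sIH : (H :&: L)%G \subset H by apply: subsetIl.
  have sIG := subset_trans sIL sLG.
  have r1 := le_rk sIG sHG sIH.
  have r2 := lt_rk sLG sKG sLK nLK.
  have wHK : wt (H, K) <= W \/ ((H, K) \in S0 /\ wt (H, K) = W.+1).
    case/or3P: oA => [/ltnW -> | KS | /andP[/eqP -> _]]; [by left | | by left].
    have [_ _ le e] := S0ok KS.
    by case: (ltngtP (wt (H, K)) W.+1) le => // [lt _ | eq _]; [left | right].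
  case: wHK => [le | [KS ew]].
    by rewrite /wt /=; move: le r1 r2; rewrite /wt /=;
      move: (rk H) (rk K) (rk L) (rk _) => ????; clear; lia.
  have [_ _ _ /(_ ew) /= eK] := S0ok KS.
  move: ew; rewrite /wt /= => ew.
  move: r1 => /= r1.
  case: (ltnP (rk (H :&: L) + rk L) W) => [lt | h]; first by apply/orP; left.
  exfalso.
  have eI : rk (H :&: L)%G = rk H.
    by move: h r1 r2 ew eK; move: (rk H) (rk K) (rk L) (rk _) => ????; clear; lia.
  have eIH : (H :&: L)%G = H.
    apply/eqP; apply/negPn/negP => ne.
    by have := lt_rk sIG sHG sIH ne; rewrite eI ltnn.
  have sHL : H \subset L by move: sIL; rewrite eIH.
  have eL : rk L = rk H.
    by move: h r1 r2 ew eK; move: (rk H) (rk K) (rk L) (rk _) => ????; clear; lia.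
  case: (eqVneq H L) => [eHL | nHL].
    by move: nIL; rewrite eIH eHL eqxx.
  by have := lt_rk sHG sLG sHL nHL; rewrite eL ltnn.
Qed.

End TS.


Lemma gen_neq (S : {set arrow_t gT}) s W (bad : arrow_t gT -> bool) :
  s \in S ->
  (forall (H K L : {group gT}), H \subset K -> K \subset G ->
     L \subset K -> bad ((H :&: L)%G, L) -> bad (H, K)) ->
  (forall (x y z : {group gT}), x \subset y -> y \subset z ->
     z \subset G -> ~~ bad (x, y) -> ~~ bad (y, z) -> ~~ bad (x, z)) ->
  (forall A, A \in S :\ s ->
    [/\ is_arrow G A, ~~ bad A, wt A <= W.+1 & wt A = W.+1 -> rk A.2 = (rk A.1).+1]) ->
  s \notin Tset bad (S :\ s) W ->
  gen_ts G (S :\ s) != gen_ts G S.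
Proof.
move=> sS bR bC ok nT; apply/eqP => E.
have : s \in gen_ts G S.
  by apply/bigcapP => T /andP[_ /subsetP]; apply.
rewrite -E => /bigcapP /(_ (Tset bad (S :\ s) W)).
rewrite Tset_ts // S0_Tset // => /(_ isT).
by rewrite (negbTE nT).
Qed.

Definition badb (b1 b2 : {group gT}) (A : arrow_t gT) :=
  (b2 \subset A.2) && (A.1 :&: b2 == b1 :> {set gT}).

Lemma badbR (b1 b2 H K L : {group gT}) : H \subset K -> K \subset G ->
  L \subset K -> badb b1 b2 ((H :&: L)%G, L) -> badb b1 b2 (H, K).
Proof.
move=> sHK sKG sLK; rewrite /badb /= => /andP[s2L /eqP e].
rewrite (subset_trans s2L sLK) /=; rewrite -e -setIA.
by rewrite (setIidPr s2L).
Qed.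

Lemma badbC (b1 b2 : {group gT}) : b1 \subset b2 -> b2 \subset G ->
  rk b2 = (rk b1).+1 ->
  forall (x y z : {group gT}), x \subset y -> y \subset z ->
     z \subset G -> ~~ badb b1 b2 (x, y) -> ~~ badb b1 b2 (y, z) ->
     ~~ badb b1 b2 (x, z).
Proof.
move=> s12 s2G e12 x y z sxy syz szG; rewrite /badb /=.
move=> n1 n2; apply/negP => /andP[s2z /eqP e].
have s1G := subset_trans s12 s2G.
have sYb2 : (y :&: b2)%G \subset b2 by apply: subsetIr.
have sYG := subset_trans sYb2 s2G.
have s1Y : b1 \subset (y :&: b2)%G by rewrite -e /=; apply: setSI.
case: (eqVneq (y :&: b2)%G b1) => [eY | nY1].
  by move: n2; rewrite s2z /= -eY eqxx.
case: (eqVneq (y :&: b2)%G b2) => [eY | nY2].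
  have s2y : b2 \subset y by rewrite -eY subsetIl.
  by move: n1; rewrite s2y /= e eqxx.
have nY1' : b1 != (y :&: b2)%G by rewrite eq_sym.
have l1 := lt_rk s1G sYG s1Y nY1'.
have l2 := lt_rk sYG s2G sYb2 nY2.
by move: l1 l2; rewrite e12; move: (rk b1) (rk _) => ??; clear; lia.
Qed.


Section Main.
Variable a : nat.
Hypotheses (m2 : 2 <= m) (na : n = m + 2 * a).

Definition Sdef : {set arrow_t gT} :=
  [set A in nonid_arrows G | Pc m a (cp A.1) (cq A.1) (cp A.2) (cq A.2)].

Lemma Sdef_min : minimal_gen G Sdef.
Proof.
move=> [X Y] sS; move: (sS); rewrite inE => /andP[]; rewrite inE /is_arrow /=.
move=> /andP[/andP[sXY sYG] nXY] Ps.
have sXG := subset_trans sXY sYG.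
set s := (X, Y) in sS *.
pose W := 2 * m + 2 * a.
have Sok : forall A, A \in Sdef :\ s ->
    [/\ is_arrow G A, wt A <= W.+1 & wt A = W.+1 -> rk A.2 = (rk A.1).+1].
  move=> [H K]; rewrite !inE /is_arrow /= => /andP[_ /andP[/andP[/andP[sHK sKG] _] P]].
  have [w1 w2 w3] := Pc_wt P; rewrite /wt /rk /=; split => //; by rewrite sHK sKG.
have wts : W <= wt s by have [w1 _ _] := Pc_wt Ps; rewrite /wt /rk /=.
case: (boolP (compw (Sdef :\ s) W s)) => [cw | ncw].
  case/existsP: cw => v /and4P [vS /eqP wv Xv /eqP rv].
  move: (vS); rewrite /= !inE /is_arrow /= => /andP[_ /andP[/andP[/andP[svY _] _] Pv]].
  have svG := subset_trans svY sYG.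
  apply: (gen_neq (W := W) (bad := badb X v)) => //.
  - by move=> H K L; apply: badbR.
  - by apply: badbC.
  - move=> A AS; have [a1 a2 a3] := Sok A AS; split => //.
    case: A AS {a1 a2 a3} => H K; rewrite !inE /is_arrow /=.
    move=> /andP[nA /andP[/andP[/andP[sHK sKG] _] Ph]].
    have sHG := subset_trans sHK sKG.
    apply/negP; rewrite /badb /= => /andP[svK /eqP eI].
    have [mn1 mn2] := meet_coords sHG svG.
    have cI1 : cp (H :&: v) = cp X by rewrite eI.
    have cI2 : cq (H :&: v) = cq X by rewrite eI.
    have [_ kb1 kb2] := card_coords sKG.
    move: (Xv); rewrite (sub_coords sXG svG) => /andP[xv1 xv2].
    move: (sHK); rewrite (sub_coords sHG sKG) => /andP[hk1 hk2].
    move: (svK); rewrite (sub_coords svG sKG) => /andP[vk1 vk2].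
    move: wv rv; rewrite /wt /rk /= => wv rv.
    rewrite na in kb1.
    have [e1 e2 e3 e4] := key m2 Ps Pv wv xv1 xv2 rv Ph hk1 hk2 vk1 vk2
      (etrans (esym mn1) cI1) (etrans (esym mn2) cI2) kb1 kb2.
    have eH := eq_coords sHG sXG e1 e2.
    have eK := eq_coords sKG sYG e3 e4.
    by move: nA; rewrite eH eK eqxx.
  - apply/negP; rewrite inE => /andP[_ /orP[/eqP e | /andP[nb _]]].
      by move: e; rewrite /s /= => e; rewrite e eqxx in nXY.
    move: nb; rewrite /badb /= svY /=.
    by rewrite (setIidPl Xv) eqxx.
apply: (gen_neq (W := W) (bad := fun _ => false)) => //.
- by move=> A AS; have [a1 a2 a3] := Sok A AS; split.
- apply/negP; rewrite inE => /andP[_ /orP[/eqP e | /andP[_ o]]].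
    by move: e; rewrite /s /= => e; rewrite e eqxx in nXY.
  move/or3P: o => [lt | | /andP[_ c]].
  + by move: wts; rewrite leqNgt lt.
  + by rewrite setD11.
  + by rewrite c in ncw.
Qed.


Lemma arrow_eq (A B : arrow_t gT) : is_arrow G A -> is_arrow G B ->
  (A == B) = [&& cp A.1 == cp B.1, cq A.1 == cq B.1, cp A.2 == cp B.2 & cq A.2 == cq B.2].
Proof.
case: A B => [H K] [H' K']; rewrite /is_arrow /= => /andP[sHK sKG] /andP[sHK' sK'G].
apply/idP/idP; first by move/eqP => [-> ->]; rewrite !eqxx.
case/and4P => /eqP e1 /eqP e2 /eqP e3 /eqP e4.
have sHG := subset_trans sHK sKG; have sH'G := subset_trans sHK' sK'G.
by rewrite (eq_coords sHG sH'G e1 e2) (eq_coords sKG sK'G e3 e4).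
Qed.

Lemma inR A : (A \in Rmid2 G p q (n + m)) =
  (A \in nonid_arrows G) && (cp A.1 + cq A.1 + (cp A.2 + cq A.2) == 2 * m + 2 * a).
Proof.
rewrite inE; congr (_ && _); rewrite /cp /cq.
move: (logn p _) (logn q _) (logn p _) (logn q _) => x1 x2 x3 x4.
by apply/eqP/eqP; rewrite na; lia.
Qed.

Lemma mk_arrow (h1 h2 k1 k2 : nat) : h1 <= k1 -> h2 <= k2 -> k1 <= n -> k2 <= m ->
  (h1 != k1) || (h2 != k2) ->
  exists A : arrow_t gT, [/\ A \in nonid_arrows G, cp A.1 = h1, cq A.1 = h2,
     cp A.2 = k1 & cq A.2 = k2].
Proof.
move=> hk1 hk2 kn km nhk.
have [K [sKG K1 K2]] := exists_coords kn km.
have [H [sHG H1 H2]] := exists_coords (leq_trans hk1 kn) (leq_trans hk2 km).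
exists (H, K); split => //.
rewrite inE /is_arrow /= (sub_coords sHG sKG) H1 H2 K1 K2 hk1 hk2 sKG /=.
apply/eqP => eHK; rewrite eHK K1 K2 in H1 H2.
by move: nhk; rewrite H1 H2 !eqxx.
Qed.

Lemma nonid_is (A : arrow_t gT) : A \in nonid_arrows G -> is_arrow G A.
Proof. by rewrite inE => /andP[]. Qed.

Lemma nonid_bnd (A : arrow_t gT) : A \in nonid_arrows G -> cp A.2 <= m + 2 * a.
Proof.
move/nonid_is => /andP[_ s]; have [_ b _] := card_coords s; by rewrite -na.
Qed.

Lemma Sdef_card : #|Sdef| = #|Rmid2 G p q (n + m)| + 2.
Proof.
have [t1 [t1N t11 t12 t13 t14]] := @mk_arrow a m (a + 1) m ltac:(lia) ltac:(lia)
   ltac:(lia) ltac:(lia) ltac:(rewrite orbC /=; apply/eqP; lia).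
have [t2 [t2N t21 t22 t23 t24]] := @mk_arrow (m + a) 0 (m + a) 1 ltac:(lia) ltac:(lia)
   ltac:(lia) ltac:(lia) ltac:(apply/orP; right; apply/eqP; lia).
set R := Rmid2 G p q (n + m).
have neN : forall A B, A \notin nonid_arrows G -> B \in nonid_arrows G -> (A == B) = false.
  by move=> A B AN BN; apply/negbTE; apply: contraNneq AN => ->.
have t1R : t1 \notin R by rewrite inR t1N /= t11 t12 t13 t14; apply/eqP; lia.
have t2R : t2 \notin R by rewrite inR t2N /= t21 t22 t23 t24; apply/eqP; lia.
have t12n : t1 != t2.
  by rewrite (arrow_eq (nonid_is t1N) (nonid_is t2N)) t11 t21; apply/negP => /and4P[/eqP ? _ _ _]; lia.
case: (posnP a) => [a0 | apos].
  have eS : Sdef = t1 |: (t2 |: R).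
    apply/setP => A; rewrite [A \in Sdef]inE !in_setU1 inR.
    case: (boolP (A \in nonid_arrows G)) => AN; last by rewrite !neN.
    rewrite (arrow_eq (nonid_is AN) (nonid_is t1N)) (arrow_eq (nonid_is AN) (nonid_is t2N)).
    rewrite t11 t12 t13 t14 t21 t22 t23 t24 /=.
    by rewrite Pc_eq0 // nonid_bnd.
  rewrite eS !cardsU1 in_setU1 (negbTE t12n) /= t1R t2R /=.
  by rewrite addnA addnC.
have [t3 [t3N t31 t32 t33 t34]] := @mk_arrow (m + a) 0 (m + a + 1) 0 ltac:(lia) ltac:(lia)
   ltac:(lia) ltac:(lia) ltac:(apply/orP; left; apply/eqP; lia).
have [r0 [r0N r01 r02 r03 r04]] := @mk_arrow (m + a - 1) 0 (m + a + 1) 0 ltac:(lia) ltac:(lia)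
   ltac:(lia) ltac:(lia) ltac:(apply/orP; left; apply/eqP; lia).
have t3R : t3 \notin R by rewrite inR t3N /= t31 t32 t33 t34; apply/eqP; lia.
have r0R : r0 \in R by rewrite inR r0N /= r01 r02 r03 r04; apply/eqP; lia.
have t13n : t1 != t3.
  by rewrite (arrow_eq (nonid_is t1N) (nonid_is t3N)) t11 t31; apply/negP => /and4P[/eqP ? _ _ _]; lia.
have t23n : t2 != t3.
  by rewrite (arrow_eq (nonid_is t2N) (nonid_is t3N)) t24 t34 !andbF.
have eS : Sdef = t1 |: (t2 |: (t3 |: (R :\ r0))).
  apply/setP => A; rewrite [A \in Sdef]inE !in_setU1 in_setD1 inR.
  case: (boolP (A \in nonid_arrows G)) => AN; last by rewrite !neN.
  rewrite (arrow_eq (nonid_is AN) (nonid_is t1N)) (arrow_eq (nonid_is AN) (nonid_is t2N)).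
  rewrite (arrow_eq (nonid_is AN) (nonid_is t3N)) (arrow_eq (nonid_is AN) (nonid_is r0N)).
  rewrite t11 t12 t13 t14 t21 t22 t23 t24 t31 t32 t33 t34 r01 r02 r03 r04 /=.
  by rewrite Pc_eqpos.
rewrite eS !cardsU1 !in_setU1 !in_setD1 (negbTE t12n) (negbTE t13n) (negbTE t23n) /=.
rewrite (negbTE t1R) (negbTE t2R) (negbTE t3R) !andbF /=.
rewrite (cardsD1 r0 R) r0R.
by move: (#|R :\ r0|) => x; rewrite addn2 /= !add1n.
Qed.

Theorem Sdef_all : exists S : {set arrow_t gT},
    [/\ S \subset nonid_arrows G, minimal_gen G S &
        #|S| = #|Rmid2 G p q (n + m)| + 2].
Proof.
exists Sdef; split.
- by apply/subsetP => A; rewrite inE => /andP[].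
- exact: Sdef_min.
- exact: Sdef_card.
Qed.

End Main.
End Coords.

Theorem lemma7p4 (gT : finGroupType) (G : {group gT}) (p q n m : nat) :
  prime p -> prime q -> p != q -> 2 <= m -> m <= n -> ~~ odd (n + m) ->
  cyclic G -> #|G| = p ^ n * q ^ m ->
  exists S : {set arrow_t gT},
    [/\ S \subset nonid_arrows G, minimal_gen G S &
        #|S| = #|Rmid2 G p q (n + m)| + 2].
Proof.
move=> pp pq pnq m2 mn ev cycG oG.
have e2 := odd_double_half (n + m); rewrite (negbTE ev) add0n in e2.
pose a := (n + m)./2 - m.
have na : n = m + 2 * a.
  move: e2; rewrite /a -muln2; move: ((n + m)./2) => h; lia.
exact: (Sdef_all pp pq pnq cycG oG m2 na).
Qed.
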